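(* Let $j_1,\dots,j_6$ be non-negative half-integers (elements of $\tfrac12\mathbb Z_{\ge0}$) such that $j_1=j_5+j_6\ge 3$, $j_2=j_3$, and such that each of the four triples $$(h,j_2,j_3),\ (h,j_5,j_6),\ (j_4,j_2,j_6),\ (j_4,j_5,j_3)$$ satisfies the triangle condition both for $h=j_1$ and for $h=j_1-1$. If $\left\{\begin{matrix} j_1-1 & j_2 & j_3\\ j_4 & j_5 & j_6\end{matrix}\right\}=0$, then $\left\{\begin{matrix} j_1-2 & j_2 & j_3\\ j_4 & j_5 & j_6\end{matrix}\right\}\ne0$ and $\left\{\begin{matrix} j_1-3 & j_2 & j_3\\ j_4 & j_5 & j_6\end{matrix}\right\}\ne0$. In particular the four triples above satisfy the triangle condition also for $h=j_1-2$ and $h=j_1-3$.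
   Context: Three half-integers $j_1,j_2,j_3$ satisfy the triangle condition if $j_1+j_2+j_3\in\mathbb Z$ and $|j_1-j_2|\le j_3\le j_1+j_2$ (in particular all are non-negative). $\left\{\begin{matrix} j_1 & j_2 & j_3\\ j_4 & j_5 & j_6\end{matrix}\right\}$ denotes the Racah–Wigner $6j$-symbol of angular momentum theory (as in Varshalovich–Moskalev–Khersonskii, Quantum Theory of Angular Momentum, Ch. 9); it is a real number, defined to be $0$ unless all four triples $(j_1,j_2,j_3),(j_1,j_5,j_6),(j_4,j_2,j_6),(j_4,j_5,j_3)$ satisfy the triangle condition. *)

(* Defs.v *)
From Stdlib Require Import Reals Arith List Bool.
Open Scope R_scope.
Local Open Scope bool_scope.

(* CONVENTION: a non-negative half-integer j is represented by the natural
   number J = 2j.  All arguments below are these doubled values. *)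

(* Triangle condition for (j1,j2,j3) given doubled values a=2j1, b=2j2, c=2j3:
   j1+j2+j3 integer (a+b+c even) and |j1-j2| <= j3 <= j1+j2
   (the latter unfolds to a <= b+c, b <= a+c, c <= a+b). *)
Definition trib (a b c : nat) : bool :=
  Nat.even (a + b + c) && Nat.leb a (b + c) && Nat.leb b (a + c)
  && Nat.leb c (a + b).

Definition tri (a b c : nat) : Prop := trib a b c = true.

Definition factR (n : nat) : R := INR (fact n).

Definition Delta (a b c : nat) : R :=
  sqrt (factR ((a + b - c) / 2)%nat * factR ((a + c - b) / 2)%nat
        * factR ((b + c - a) / 2)%nat / factR ((a + b + c) / 2 + 1)%nat).

(* Racah sum (Varshalovich et al., Ch. 9, eq. 9.2.1):
   sum_t (-1)^t (t+1)! / [(t-a-b-c)!(t-a-e-f)!(t-d-b-f)!(t-d-e-c)!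
                           (a+b+d+e-t)!(a+c+d+f-t)!(b+c+e+f-t)!],
   t ranging over the integers for which all factorial arguments are >= 0. *)
Definition racah_sum (a b c d e f : nat) : R :=
  let al1 := ((a + b + c) / 2)%nat in
  let al2 := ((a + e + f) / 2)%nat in
  let al3 := ((d + b + f) / 2)%nat in
  let al4 := ((d + e + c) / 2)%nat in
  let be1 := ((a + b + d + e) / 2)%nat in
  let be2 := ((a + c + d + f) / 2)%nat in
  let be3 := ((b + c + e + f) / 2)%nat in
  fold_right Rplus 0
    (map (fun t : nat =>
       if Nat.leb al1 t && Nat.leb al2 t && Nat.leb al3 t && Nat.leb al4 t
          && Nat.leb t be1 && Nat.leb t be2 && Nat.leb t be3
       then (-1) ^ t * factR (t + 1)%nat
            / (factR (t - al1)%nat * factR (t - al2)%nat * factR (t - al3)%nat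
               * factR (t - al4)%nat * factR (be1 - t)%nat * factR (be2 - t)%nat
               * factR (be3 - t)%nat)
       else 0)
     (seq 0 (S be1))).

Definition sixj (a b c d e f : nat) : R :=
  if trib a b c && trib a e f && trib d b f && trib d e c
  then Delta a b c * Delta a e f * Delta d b f * Delta d e c
       * racah_sum a b c d e f
  else 0.

(* Main.v *)
Require Import Defs.
From Stdlib Require Import Reals Arith Lia Lra ZArith List Bool Psatz.
Open Scope R_scope.

Definition invf (z : Z) : R :=
  if (z <? 0)%Z then 0 else / INR (fact (Z.to_nat z)).

Fixpoint ffR (r : R) (j : nat) : R :=
  match j with O => 1 | S j' => ffR r j' * (r - INR j') end.
Fixpoint riseR (r : R) (j : nat) : R :=
  match j with O => 1 | S j' => riseR r j' * (r + INR j') end.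

Lemma factR_pos n : 0 < factR n.
Proof. unfold factR. apply lt_0_INR. apply lt_O_fact. Qed.
Lemma factR_nz n : factR n <> 0.
Proof. apply Rgt_not_eq, factR_pos. Qed.

Lemma invf_nat n : invf (Z.of_nat n) = / factR n.
Proof.
  unfold invf. destruct (Z.ltb_spec (Z.of_nat n) 0); [lia|].
  rewrite Nat2Z.id. reflexivity.
Qed.

Lemma invf_pred z : invf (z - 1) = IZR z * invf z.
Proof.
  unfold invf.
  destruct (Z.ltb_spec (z-1) 0); destruct (Z.ltb_spec z 0).
  - ring.
  - assert (z = 0)%Z by lia. subst. simpl. ring.
  - lia.
  - assert (Ez : Z.to_nat z = S (Z.to_nat (z-1))).
    { rewrite <- Z2Nat.inj_succ by lia. f_equal. lia. }
    rewrite Ez.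
    rewrite fact_simpl, mult_INR.
    replace (IZR z) with (INR (S (Z.to_nat (z-1)))).
    2:{ rewrite INR_IZR_INZ. f_equal. rewrite <- Ez. rewrite Z2Nat.id by lia. reflexivity. }
    field. split; apply not_0_INR; (apply fact_neq_0 || lia).
Qed.

Lemma invf_down z j : invf (z - Z.of_nat j) = ffR (IZR z) j * invf z.
Proof.
  induction j.
  - simpl. rewrite Z.sub_0_r. ring.
  - replace (z - Z.of_nat (S j))%Z with ((z - Z.of_nat j) - 1)%Z by lia.
    rewrite invf_pred, IHj. simpl. rewrite minus_IZR, <- INR_IZR_INZ. ring.
Qed.

Lemma invf_neg z : (z < 0)%Z -> invf z = 0.
Proof. intros. unfold invf. destruct (Z.ltb_spec z 0); [reflexivity|lia]. Qed.

Definition sumR (l : list R) : R := fold_right Rplus 0 l.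

Lemma sumR_app l1 l2 : sumR (l1 ++ l2) = sumR l1 + sumR l2.
Proof. induction l1; simpl. ring. unfold sumR in *. simpl. rewrite IHl1. ring. Qed.

Lemma sum_tail0 (g : nat -> R) L a d : (forall t, (L <= t)%nat -> g t = 0) -> (L <= a)%nat ->
  sumR (map g (seq a d)) = 0.
Proof.
  intros Hg. revert a. induction d; intros a Ha; simpl. reflexivity.
  unfold sumR in *. simpl. rewrite Hg by lia. rewrite IHd by lia. ring.
Qed.

Lemma sum_ext_len (g : nat -> R) L L' : (forall t, (L <= t)%nat -> g t = 0) -> (L <= L')%nat ->
  sumR (map g (seq 0 L')) = sumR (map g (seq 0 L)).
Proof.
  intros Hg HL. replace L' with (L + (L' - L))%nat by lia.
  rewrite seq_app, map_app, sumR_app. rewrite (sum_tail0 g L (0+L)); [apply Rplus_0_r|exact Hg|lia].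
Qed.

Lemma sum_zero_range (g : nat -> R) a d : (forall t, (a <= t < a + d)%nat -> g t = 0) ->
  sumR (map g (seq a d)) = 0.
Proof.
  revert a. induction d; intros a Hg; simpl. reflexivity.
  unfold sumR in *; simpl. rewrite Hg by lia. rewrite IHd by (intros; apply Hg; lia). ring.
Qed.

Lemma sum_head0 (g : nat -> R) n : (forall t, (t < n)%nat -> g t = 0) ->
  sumR (map g (seq 0 n)) = 0.
Proof. intros Hg. apply sum_zero_range. intros; apply Hg; lia. Qed.

Lemma window (g : nat -> R) M n k :
  (forall t, (t < n)%nat -> g t = 0) -> (forall t, (n + k < t)%nat -> g t = 0) ->
  (forall t, (M < t)%nat -> g t = 0) ->
  sumR (map g (seq 0 (S M))) = sumR (map g (seq n (S k))).
Proof.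
  intros H1 H2 H3.
  set (L := Nat.min (S M) (n + S k)).
  assert (HL : forall t, (L <= t)%nat -> g t = 0).
  { intros t Ht. unfold L in Ht. destruct (Nat.min_spec (S M) (n + S k)) as [[? E]|[? E]];
    rewrite E in Ht; [apply H3|apply H2]; lia. }
  rewrite (sum_ext_len g L (S M)) by (auto; unfold L; lia).
  rewrite <- (sum_ext_len g L (n + S k)) by (auto; unfold L; lia).
  rewrite seq_app, map_app, sumR_app, sum_head0 by auto. simpl. ring.
Qed.

Definition gfun (al1 al2 al3 al4 be1 be2 be3 : nat) (t : nat) : R :=
  if Nat.leb al1 t && Nat.leb al2 t && Nat.leb al3 t && Nat.leb al4 t
     && Nat.leb t be1 && Nat.leb t be2 && Nat.leb t be3
  then (-1) ^ t * factR (t + 1)%nat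
       / (factR (t - al1)%nat * factR (t - al2)%nat * factR (t - al3)%nat
          * factR (t - al4)%nat * factR (be1 - t)%nat * factR (be2 - t)%nat
          * factR (be3 - t)%nat)
  else 0.

Lemma racah_unfold a b c d e f : racah_sum a b c d e f =
  sumR (map (gfun ((a + b + c) / 2) ((a + e + f) / 2) ((d + b + f) / 2) ((d + e + c) / 2)
     ((a + b + d + e) / 2) ((a + c + d + f) / 2) ((b + c + e + f) / 2))
     (seq 0 (S ((a + b + d + e) / 2)))).
Proof. reflexivity. Qed.

Lemma invf_sub a b : (b <= a)%nat -> invf (Z.of_nat a - Z.of_nat b) = / factR (a - b).
Proof. intros. rewrite <- Nat2Z.inj_sub by lia. apply invf_nat. Qed.

Lemma gfun_eq al1 al2 al3 al4 be1 be2 be3 t :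
  gfun al1 al2 al3 al4 be1 be2 be3 t =
  (-1) ^ t * factR (t + 1) * invf (Z.of_nat t - Z.of_nat al1) * invf (Z.of_nat t - Z.of_nat al2)
  * invf (Z.of_nat t - Z.of_nat al3) * invf (Z.of_nat t - Z.of_nat al4)
  * invf (Z.of_nat be1 - Z.of_nat t) * invf (Z.of_nat be2 - Z.of_nat t)
  * invf (Z.of_nat be3 - Z.of_nat t).
Proof.
  unfold gfun.
  destruct (Nat.leb_spec al1 t); [|rewrite (invf_neg (Z.of_nat t - Z.of_nat al1)) by lia; simpl; ring].
  destruct (Nat.leb_spec al2 t); [|rewrite (invf_neg (Z.of_nat t - Z.of_nat al2)) by lia; simpl; ring].
  destruct (Nat.leb_spec al3 t); [|rewrite (invf_neg (Z.of_nat t - Z.of_nat al3)) by lia; simpl; ring].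
  destruct (Nat.leb_spec al4 t); [|rewrite (invf_neg (Z.of_nat t - Z.of_nat al4)) by lia; simpl; ring].
  destruct (Nat.leb_spec t be1); [|rewrite (invf_neg (Z.of_nat be1 - Z.of_nat t)) by lia; simpl; ring].
  destruct (Nat.leb_spec t be2); [|rewrite (invf_neg (Z.of_nat be2 - Z.of_nat t)) by lia; simpl; ring].
  destruct (Nat.leb_spec t be3); [|rewrite (invf_neg (Z.of_nat be3 - Z.of_nat t)) by lia; simpl; ring].
  simpl. rewrite !invf_sub by lia.
  field. repeat split; apply factR_nz.
Qed.

Lemma gfun_support al1 al2 al3 al4 be1 be2 be3 t :
  (t < al1 \/ be3 < t \/ be1 < t)%nat -> gfun al1 al2 al3 al4 be1 be2 be3 t = 0.
Proof.
  intros H. unfold gfun.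
  destruct (Nat.leb_spec al1 t); destruct (Nat.leb_spec t be1); destruct (Nat.leb_spec t be3);
  simpl; rewrite ?andb_false_r; try reflexivity; lia.
Qed.

Lemma fact_rise n s : factR (n + s + 1) = factR (n + 1) * riseR (INR n + 2) s.
Proof.
  induction s.
  - simpl. rewrite Nat.add_0_r. ring.
  - replace (n + S s + 1)%nat with (S (n + s + 1)) by lia.
    unfold factR in *. rewrite fact_simpl, mult_INR, IHs. simpl riseR.
    rewrite S_INR, !plus_INR. simpl. ring.
Qed.

Lemma g_at al1 al2 al3 al4 be1 be2 be3 x B C u v k n t s j :
  al1 = n -> (al2 + x = n)%nat -> (al3 + B = n + k)%nat -> (al4 + C = n + k)%nat ->
  be1 = (n + u)%nat -> be2 = (n + v)%nat -> be3 = (n + k)%nat -> t = (n + s)%nat ->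
  (s + j = k)%nat ->
  gfun al1 al2 al3 al4 be1 be2 be3 t =
  (-1) ^ n * factR (n + 1) *
  ((-1) ^ s * riseR (INR n + 2) s * ffR (INR k) j * ffR (INR k) s * ffR (INR x + INR k) j
   * ffR (INR B) j * ffR (INR C) j * ffR (INR u) s * ffR (INR v) s)
  / (factR k * factR k * factR (x + k) * factR B * factR C * factR u * factR v).
Proof.
  intros H1 H2 H3 H4 H5 H6 H7 Ht Hk.
  rewrite gfun_eq.
  replace (Z.of_nat t - Z.of_nat al1)%Z with (Z.of_nat k - Z.of_nat j)%Z by lia.
  replace (Z.of_nat t - Z.of_nat al2)%Z with (Z.of_nat (x + k) - Z.of_nat j)%Z by lia.
  replace (Z.of_nat t - Z.of_nat al3)%Z with (Z.of_nat B - Z.of_nat j)%Z by lia.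
  replace (Z.of_nat t - Z.of_nat al4)%Z with (Z.of_nat C - Z.of_nat j)%Z by lia.
  replace (Z.of_nat be1 - Z.of_nat t)%Z with (Z.of_nat u - Z.of_nat s)%Z by lia.
  replace (Z.of_nat be2 - Z.of_nat t)%Z with (Z.of_nat v - Z.of_nat s)%Z by lia.
  replace (Z.of_nat be3 - Z.of_nat t)%Z with (Z.of_nat k - Z.of_nat s)%Z by lia.
  rewrite !invf_down, !invf_nat, <- !INR_IZR_INZ.
  subst t. rewrite fact_rise, pow_add, plus_INR.
  field. repeat split; apply factR_nz.
Qed.

Definition Tk (x B C u v k n s : nat) : R :=
  let j := (k - s)%nat in
  (-1) ^ s * riseR (INR n + 2) s * ffR (INR k) j * ffR (INR k) s * ffR (INR x + INR k) j
   * ffR (INR B) j * ffR (INR C) j * ffR (INR u) s * ffR (INR v) s.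

Lemma half a q : a = (2 * q)%nat -> (a / 2)%nat = q.
Proof. intros ->. rewrite Nat.mul_comm. apply Nat.div_mul. lia. Qed.

Lemma sum_shift_gen (g : nat -> R) n L : forall m,
  sumR (map g (seq (n + m) L)) = sumR (map (fun s => g (n + s)%nat) (seq m L)).
Proof.
  induction L; intros m. reflexivity.
  simpl. unfold sumR in *. simpl. f_equal.
  replace (S (n + m)) with (n + S m)%nat by lia. apply IHL.
Qed.

Lemma sum_shift (g : nat -> R) n L :
  sumR (map g (seq n L)) = sumR (map (fun s => g (n + s)%nat) (seq 0 L)).
Proof. rewrite <- sum_shift_gen. rewrite Nat.add_0_r. reflexivity. Qed.

Lemma sum_scale c (f : nat -> R) l : sumR (map (fun s => c * f s) l) = c * sumR (map f l).
Proof. induction l; unfold sumR in *; simpl. ring. rewrite IHl. ring. Qed.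

Lemma racah_closed x B C u v k :
  (B + v = C + u)%nat -> (k <= B + v)%nat ->
  racah_sum (2 * (B + v) - 2 * k) (x + B + v) (x + B + v) (x + u + v) (u + B) (v + C) =
  (-1) ^ (x + 2 * (B + v) - k) * factR (x + 2 * (B + v) - k + 1)
  / (factR k * factR k * factR (x + k) * factR B * factR C * factR u * factR v)
  * sumR (map (Tk x B C u v k (x + 2 * (B + v) - k)) (seq 0 (S k))).
Proof.
  intros Hm Hk. set (n := (x + 2 * (B + v) - k)%nat).
  rewrite racah_unfold.
  rewrite (half (2 * (B + v) - 2 * k + (x + B + v) + (x + B + v)) n) by (unfold n; lia).
  rewrite (half (2 * (B + v) - 2 * k + (u + B) + (v + C)) (n - x)) by (unfold n; lia).
  rewrite (half (x + u + v + (x + B + v) + (v + C)) (n + k - B)) by (unfold n; lia).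
  rewrite (half (x + u + v + (u + B) + (x + B + v)) (n + k - C)) by (unfold n; lia).
  rewrite (half (2 * (B + v) - 2 * k + (x + B + v) + (x + u + v) + (u + B)) (n + u)) by (unfold n; lia).
  rewrite (half (2 * (B + v) - 2 * k + (x + B + v) + (x + u + v) + (v + C)) (n + v)) by (unfold n; lia).
  rewrite (half (x + B + v + (x + B + v) + (u + B) + (v + C)) (n + k)) by (unfold n; lia).
  rewrite (window _ (n + u) n k).
  2-4: intros; apply gfun_support; lia.
  rewrite sum_shift.
  rewrite <- sum_scale.
  f_equal. apply map_ext_in. intros s Hs. apply in_seq in Hs.
  rewrite (g_at _ _ _ _ _ _ _ x B C u v k n (n + s) s (k - s)) by (unfold n in *; lia).
  unfold Tk. simpl. field. repeat split; apply factR_nz.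
Qed.

Definition S1p (X B U V : R) := (X + 1) * (B - U) - 2 * U * V.
Definition brk (X B U V : R) :=
  let C := B + V - U in let W := 2 * (B + V) in let N := X + W in
  - ((W - 2) * (B * C)) - (X + 2) * (N + 1) * (B + C - 1) - N * (N + 1) * (U + V - 1).
Definition lam2 (X B U V : R) := (4)*V + (-4)*V^2 + (4)*U*V + (-4)*U*V^3 + (4)*B + (-12)*B*V + (4)*B*V^2 + (4)*B*U + (-4)*B*U*V + (-8)*B*U*V^2 + (-8)*B^2 + (8)*B^2*V + (-4)*B^2*U + (-4)*B^2*U*V + (4)*B^3 + (2)*X*V + (-2)*X*V^2 + (2)*X*U*V + (-2)*X*U*V^2 + (2)*X*B + (-6)*X*B*V + (2)*X*B*V^2 + (2)*X*B*U + (-4)*X*B*U*V + (-4)*X*B^2 + (4)*X*B^2*V + (-2)*X*B^2*U + (2)*X*B^3.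
Definition lam3 (X B U V : R) := (96)*V^2 + (-144)*V^3 + (48)*V^4 + (-72)*U*V^2 + (60)*U*V^3 + (36)*U*V^4 + (-24)*U*V^5 + (-24)*U^2*V^2 + (84)*U^2*V^3 + (-84)*U^2*V^4 + (24)*U^2*V^5 + (120)*B*V + (-420)*B*V^2 + (300)*B*V^3 + (-48)*B*V^4 + (72)*B*U + (-156)*B*U*V + (72)*B*U*V^2 + (192)*B*U*V^3 + (-120)*B*U*V^4 + (72)*B*U^2 + (-60)*B*U^2*V + (48)*B*U^2*V^2 + (-144)*B*U^2*V^3 + (72)*B*U^2*V^4 + (24)*B^2 + (-336)*B^2*V + (504)*B^2*V^2 + (-156)*B^2*V^3 + (-156)*B^2*U + (120)*B^2*U*V + (252)*B^2*U*V^2 + (-216)*B^2*U*V^3 + (-108)*B^2*U^2 + (-36)*B^2*U^2*V^2 + (72)*B^2*U^2*V^3 + (-60)*B^3 + (300)*B^3*V + (-180)*B^3*V^2 + (108)*B^3*U + (72)*B^3*U*V + (-168)*B^3*U*V^2 + (36)*B^3*U^2 + (24)*B^3*U^2*V + (24)*B^3*U^2*V^2 + (48)*B^4 + (-84)*B^4*V + (-24)*B^4*U + (-48)*B^4*U*V + (-12)*B^5 + (48)*X*V + (-24)*X*V^2 + (-48)*X*V^3 + (24)*X*V^4 + (-36)*X*U*V + (-42)*X*U*V^2 + (126)*X*U*V^3 + (-48)*X*U*V^4 + (-12)*X*U^2*V + (66)*X*U^2*V^2 + (-78)*X*U^2*V^3 + (24)*X*U^2*V^4 + (48)*X*B + (-156)*X*B*V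 + (-30)*X*B*V^2 + (114)*X*B*V^3 + (-24)*X*B*V^4 + (108)*X*B*U + (-204)*X*B*U*V + (258)*X*B*U*V^2 + (-72)*X*B*U*V^3 + (-24)*X*B*U*V^4 + (60)*X*B*U^2 + (-24)*X*B*U^2*V + (-126)*X*B*U^2*V^2 + (72)*X*B*U^2*V^3 + (-132)*X*B^2 + (144)*X*B^2*V + (108)*X*B^2*V^2 + (-66)*X*B^2*V^3 + (-234)*X*B^2*U + (294)*X*B^2*U*V + (-36)*X*B^2*U*V^2 + (-72)*X*B^2*U*V^3 + (-90)*X*B^2*U^2 + (-18)*X*B^2*U^2*V + (72)*X*B^2*U^2*V^2 + (126)*X*B^3 + (-30)*X*B^3*V + (-54)*X*B^3*V^2 + (162)*X*B^3*U + (-48)*X*B^3*U*V + (-72)*X*B^3*U*V^2 + (30)*X*B^3*U^2 + (24)*X*B^3*U^2*V + (-48)*X*B^4 + (-6)*X*B^4*V + (-36)*X*B^4*U + (-24)*X*B^4*U*V + (6)*X*B^5 + (24)*X^2*V + (-36)*X^2*V^2 + (12)*X^2*V^3 + (-36)*X^2*U*V + (54)*X^2*U*V^2 + (-18)*X^2*U*V^3 + (12)*X^2*U^2*V + (-18)*X^2*U^2*V^2 + (6)*X^2*U^2*V^3 + (24)*X^2*B + (-108)*X^2*B*V + (90)*X^2*B*V^2 + (-18)*X^2*B*V^3 + (36)*X^2*B*U + (-24)*X^2*B*U*V + (18)*X^2*B*U*V^2 + (-12)*X^2*B*U*V^3 + (12)*X^2*B*U^2 + (-36)*X^2*B*U^2*V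 + (18)*X^2*B*U^2*V^2 + (-72)*X^2*B^2 + (156)*X^2*B^2*V + (-72)*X^2*B^2*V^2 + (6)*X^2*B^2*V^3 + (-78)*X^2*B^2*U + (90)*X^2*B^2*U*V + (-36)*X^2*B^2*U*V^2 + (-18)*X^2*B^2*U^2 + (18)*X^2*B^2*U^2*V + (78)*X^2*B^3 + (-90)*X^2*B^3*V + (18)*X^2*B^3*V^2 + (54)*X^2*B^3*U + (-36)*X^2*B^3*U*V + (6)*X^2*B^3*U^2 + (-36)*X^2*B^4 + (18)*X^2*B^4*V + (-12)*X^2*B^4*U + (6)*X^2*B^5.
Definition Q2 (X B U V : R) := 2 * (U * V) * brk X B U V + lam2 X B U V * S1p X B U V.

Ltac prep x B C u v k Hm Hk :=
  let n := fresh "n" in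
  set (n := (x + 2 * (B + v) - k)%nat);
  assert (HnR : INR n = INR x + 2 * (INR B + INR v) - INR k)
    by (unfold n; rewrite minus_INR by lia; repeat rewrite ?plus_INR, ?mult_INR; simpl; ring);
  assert (HCR : INR C = INR B + INR v - INR u)
    by (apply (f_equal INR) in Hm; rewrite !plus_INR in Hm; lra);
  unfold sumR, Tk; simpl; rewrite ?HnR, HCR; simpl.

Lemma poly1 x B C u v : (B + v = C + u)%nat -> (1 <= B + v)%nat ->
  sumR (map (Tk x B C u v 1 (x + 2 * (B + v) - 1)) (seq 0 2)) =
  (INR B + INR v) * S1p (INR x) (INR B) (INR u) (INR v).
Proof. intros Hm Hk. prep x B C u v 1%nat Hm Hk. unfold S1p. ring. Qed.

Lemma poly2 x B C u v : (B + v = C + u)%nat -> (2 <= B + v)%nat ->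
  sumR (map (Tk x B C u v 2 (x + 2 * (B + v) - 2)) (seq 0 3)) =
  Q2 (INR x) (INR B) (INR u) (INR v).
Proof. intros Hm Hk. prep x B C u v 2%nat Hm Hk. unfold Q2, brk, lam2, S1p. ring. Qed.

Lemma poly3 x B C u v : (B + v = C + u)%nat -> (3 <= B + v)%nat ->
  sumR (map (Tk x B C u v 3 (x + 2 * (B + v) - 3)) (seq 0 4)) =
  3 * (2 * (INR B + INR v) - 3) * (2 * (INR B + INR v) - 4) * Q2 (INR x) (INR B) (INR u) (INR v)
  + lam3 (INR x) (INR B) (INR u) (INR v) * S1p (INR x) (INR B) (INR u) (INR v).
Proof. intros Hm Hk. prep x B C u v 3%nat Hm Hk. unfold Q2, brk, lam2, lam3, S1p. ring. Qed.

Lemma tri_of a b c q : (a + b + c = 2 * q)%nat -> (a <= b + c)%nat -> (b <= a + c)%nat ->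
  (c <= a + b)%nat -> tri a b c.
Proof.
  intros Hq H1 H2 H3. unfold tri, trib.
  rewrite Hq, Nat.even_mul. simpl.
  apply Nat.leb_le in H1, H2, H3. rewrite H1, H2, H3. reflexivity.
Qed.

Lemma tri_elim a b c : tri a b c -> exists q, (a + b + c = 2 * q)%nat /\ (a <= b + c)%nat /\
  (b <= a + c)%nat /\ (c <= a + b)%nat.
Proof.
  unfold tri, trib. intros H. apply andb_prop in H as [H H3]. apply andb_prop in H as [H H2].
  apply andb_prop in H as [H0 H1]. apply Nat.leb_le in H1, H2, H3.
  apply Nat.even_spec in H0 as [q Hq]. exists q. lia.
Qed.

Lemma Delta_pos a b c : 0 < Defs.Delta a b c.
Proof.
  unfold Defs.Delta. apply sqrt_lt_R0. unfold Rdiv.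
  repeat apply Rmult_lt_0_compat; try apply factR_pos. apply Rinv_0_lt_compat, factR_pos.
Qed.

Lemma sixj_eq a b c d e f : tri a b c -> tri a e f -> tri d b f -> tri d e c ->
  sixj a b c d e f = Defs.Delta a b c * Defs.Delta a e f * Defs.Delta d b f * Defs.Delta d e c * racah_sum a b c d e f.
Proof. unfold tri, sixj. intros -> -> -> ->. reflexivity. Qed.

Lemma Dprod_pos a b c d e f :
  0 < Defs.Delta a b c * Defs.Delta a e f * Defs.Delta d b f * Defs.Delta d e c.
Proof. repeat apply Rmult_lt_0_compat; apply Delta_pos. Qed.

Lemma pref_nz n k x B C u v :
  (-1) ^ n * factR (n + 1) / (factR k * factR k * factR (x + k) * factR B * factR C * factR u * factR v) <> 0.
Proof.
  unfold Rdiv. apply Rmult_integral_contrapositive_currified.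
  apply Rmult_integral_contrapositive_currified. apply pow_nonzero. lra. apply factR_nz.
  apply Rinv_neq_0_compat. repeat apply Rmult_integral_contrapositive_currified; apply factR_nz.
Qed.

Lemma brk_neg X B U V : 0 <= X -> 1 <= B -> 1 <= U -> 1 <= V -> 1 <= B + V - U ->
  3 <= B + V -> brk X B U V < 0.
Proof.
  intros. unfold brk.
  assert (0 < (2 * (B + V) - 2) * (B * (B + V - U))) by (apply Rmult_lt_0_compat; [lra| apply Rmult_lt_0_compat; lra]).
  assert (0 < (X + 2) * (X + 2 * (B + V) + 1) * (B + (B + V - U) - 1)) by (repeat apply Rmult_lt_0_compat; lra).
  assert (0 < (X + 2 * (B + V)) * (X + 2 * (B + V) + 1) * (U + V - 1)) by (repeat apply Rmult_lt_0_compat; lra).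
  lra.
Qed.

Theorem proposition2p3 (J1 J2 J3 J4 J5 J6 : nat) :
  J1 = (J5 + J6)%nat -> (6 <= J1)%nat -> J2 = J3 ->
  (forall H : nat, (H = J1 \/ H = J1 - 2)%nat ->
     tri H J2 J3 /\ tri H J5 J6 /\ tri J4 J2 J6 /\ tri J4 J5 J3) ->
  sixj (J1 - 2) J2 J3 J4 J5 J6 = 0 ->
  sixj (J1 - 4) J2 J3 J4 J5 J6 <> 0 /\ sixj (J1 - 6) J2 J3 J4 J5 J6 <> 0 /\
  (forall H : nat, (H = J1 - 4 \/ H = J1 - 6)%nat ->
     tri H J2 J3 /\ tri H J5 J6 /\ tri J4 J2 J6 /\ tri J4 J5 J3).
Proof.
  intros HJ1 H6 HJ23 Htri H0. subst J3.
  destruct (Htri J1 (or_introl eq_refl)) as (T1 & _ & T3 & T4).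
  destruct (Htri (J1 - 2)%nat (or_intror eq_refl)) as (T5 & T6 & _ & _).
  clear Htri.
  destruct (tri_elim _ _ _ T1) as (q1 & Q1 & _ & _ & _).
  destruct (tri_elim _ _ _ T3) as (q2 & Q2a & Q2b & Q2c & Q2d).
  destruct (tri_elim _ _ _ T4) as (q3 & Q3a & Q3b & Q3c & Q3d).
  destruct (tri_elim _ _ _ T6) as (q6 & _ & _ & Q6b & Q6c).
  destruct (tri_elim _ _ _ T1) as (_ & _ & Q1b & _ & _).
  assert (Hex : exists x B C u v, J1 = (2 * (B + v))%nat /\ (B + v = C + u)%nat /\
     J2 = (x + B + v)%nat /\ J4 = (x + u + v)%nat /\ J5 = (u + B)%nat /\ J6 = (v + C)%nat).
  { exists (2 * J2 - q1)%nat, (q3 - J4)%nat, (q2 - J4)%nat, (q3 - J2)%nat, (q2 - J2)%nat. repeat split; lia. }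
  assert (Hu5 : (1 <= J5)%nat) by lia.
  assert (Hv6 : (1 <= J6)%nat) by lia.
  clear T1 Q1 Q2a Q2b Q2c Q2d Q3a Q3b Q3c Q3d q1 q2 q3 q6 Q6b Q6c Q1b.
  destruct Hex as (x & B & C & u & v & E1 & Hm & E2 & E4 & E5 & E6).
  clear HJ1. subst J1 J2 J4 J5 J6.
  assert (Hm3 : (3 <= B + v)%nat) by lia.
  rewrite sixj_eq in H0 by assumption.
  apply Rmult_integral in H0 as [H0|H0].
  { pose proof (Dprod_pos (2 * (B + v) - 2) (x + B + v) (x + B + v) (x + u + v) (u + B) (v + C)). lra. }
  replace (2 * (B + v) - 2)%nat with (2 * (B + v) - 2 * 1)%nat in H0 by lia.
  rewrite racah_closed in H0 by lia.
  apply Rmult_integral in H0 as [H0|H0]. { exfalso; eapply pref_nz; eauto. }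
  rewrite poly1 in H0 by lia.
  apply Rmult_integral in H0 as [H0|H0].
  { assert (0 < INR B + INR v). { rewrite <- plus_INR. apply lt_0_INR. lia. } lra. }
  assert (Hn : ((x + 1) * B = (x + 1) * u + 2 * u * v)%nat).
  { apply INR_eq. rewrite !plus_INR, !mult_INR, !plus_INR. simpl.
    unfold S1p in H0. apply Rminus_diag_uniq. rewrite <- H0. ring. }
  assert (Hu : (1 <= u)%nat).
  { destruct u; [|lia]. rewrite Nat.mul_0_r, Nat.mul_0_l, Nat.add_0_r in Hn.
    apply Nat.eq_mul_0 in Hn. lia. }
  assert (Hv : (1 <= v)%nat).
  { destruct v; [|lia]. rewrite Nat.mul_0_r, Nat.add_0_r in Hn.
    apply Nat.mul_cancel_l in Hn; lia. }
  assert (HB : (1 <= B)%nat) by (destruct B; [nia|lia]).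
  assert (HC : (1 <= C)%nat) by (destruct C; [nia|lia]).
  assert (HuB : (3 <= u + B)%nat) by nia.
  assert (HvC : (3 <= v + C)%nat) by nia.
  assert (HCR : INR C = INR B + INR v - INR u)
    by (apply (f_equal INR) in Hm; rewrite !plus_INR in Hm; lra).
  assert (Hbrk : brk (INR x) (INR B) (INR u) (INR v) < 0).
  { apply brk_neg.
    - apply pos_INR.
    - apply (le_INR 1); lia.
    - apply (le_INR 1); lia.
    - apply (le_INR 1); lia.
    - rewrite <- HCR. apply (le_INR 1); lia.
    - rewrite <- plus_INR. pose proof (le_INR _ _ Hm3) as H3. simpl in H3. lra. }
  assert (HQ2 : Q2 (INR x) (INR B) (INR u) (INR v) < 0).
  { unfold Q2. rewrite H0, Rmult_0_r, Rplus_0_r.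
    assert (0 < INR u * INR v).
    { apply Rmult_lt_0_compat; apply lt_0_INR; lia. }
    nra. }
  assert (TA : forall k, (1 <= k <= 3)%nat ->
    tri (2 * (B + v) - 2 * k) (x + B + v) (x + B + v) /\ tri (2 * (B + v) - 2 * k) (u + B) (v + C)).
  { intros k Hk. split.
    - apply (tri_of _ _ _ (2 * (B + v) + x - k)); lia.
    - apply (tri_of _ _ _ (2 * (B + v) - k)); lia. }
  split; [|split].
  - replace (2 * (B + v) - 4)%nat with (2 * (B + v) - 2 * 2)%nat by lia.
    destruct (TA 2%nat ltac:(lia)) as [Ta Tb].
    rewrite sixj_eq by assumption.
    apply Rmult_integral_contrapositive_currified.
    { pose proof (Dprod_pos (2 * (B + v) - 2 * 2) (x + B + v) (x + B + v) (x + u + v) (u + B) (v + C)). lra. }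
    rewrite racah_closed by lia.
    apply Rmult_integral_contrapositive_currified. apply pref_nz.
    rewrite poly2 by lia. lra.
  - replace (2 * (B + v) - 6)%nat with (2 * (B + v) - 2 * 3)%nat by lia.
    destruct (TA 3%nat ltac:(lia)) as [Ta Tb].
    rewrite sixj_eq by assumption.
    apply Rmult_integral_contrapositive_currified.
    { pose proof (Dprod_pos (2 * (B + v) - 2 * 3) (x + B + v) (x + B + v) (x + u + v) (u + B) (v + C)). lra. }
    rewrite racah_closed by lia.
    apply Rmult_integral_contrapositive_currified. apply pref_nz.
    rewrite poly3 by lia. rewrite H0, Rmult_0_r, Rplus_0_r.
    assert (6 <= 2 * (INR B + INR v)).
    { rewrite <- plus_INR. apply (le_INR 3) in Hm3. simpl in Hm3. lra. }
    assert (0 < 3 * (2 * (INR B + INR v) - 3) * (2 * (INR B + INR v) - 4)).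
    { repeat apply Rmult_lt_0_compat; lra. }
    nra.
  - intros H [-> | ->].
    + replace (2 * (B + v) - 4)%nat with (2 * (B + v) - 2 * 2)%nat by lia.
      destruct (TA 2%nat ltac:(lia)) as [Ta Tb]. auto.
    + replace (2 * (B + v) - 6)%nat with (2 * (B + v) - 2 * 3)%nat by lia.
      destruct (TA 3%nat ltac:(lia)) as [Ta Tb]. auto.
Qed.
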